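(* Let $I$ be an $f$-ideal of $S=K[x_1,\ldots,x_n]$. For an integer $l\in[n]$ with $l<ldeg(I)$, $sm(S)_l\subseteq\sqcap^\infty(G(I))$. On the other hand, if $l>deg(I)$, then $sm(S)_l\subseteq\sqcup^\infty(G(I))$.
   Context: $K$ is a field; $sm(S)_l$ is the set of square-free monomials of degree $l$; $G(I)$ is the minimal monomial generating set; $ldeg(I)$ and $deg(I)$ are the minimal and maximal degrees of elements of $G(I)$. For a set $A$ of square-free monomials, $\sqcup(A)=\{gx_i\mid g\in A,\ x_i\nmid g\}$, $\sqcap(A)=\{h\ne1\mid h=g/x_i \text{ for some } g\in A,\ x_i\mid g\}$, $\sqcup^\infty(A)=\bigcup_{i\ge1}\sqcup^i(A)$, $\sqcap^\infty(A)=\bigcup_{i\ge1}\sqcap^i(A)$. With $\sigma$ the bijection $x_{i_1}\cdots x_{i_k}\mapsto\{i_1,\ldots,i_k\}$, the facet complex $\delta_{\mathcal{F}}(I)$ has facets $\sigma(g)$, $g\in G(I)$, the Stanley–Reisner complex is $\delta_{\mathcal{N}}(I)=\{\sigma(g)\mid g\text{ square-free monomial},\ g\notin I\}$, and a square-free monomial ideal $I$ is an $f$-ideal if both complexes have the same $f$-vector. *)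

(* Defs.v *)
(* Square-free monomials of S = K[x_1..x_n] are identified with
   their supports via sigma: a square-free monomial is a {set 'I_n}
   (x_{i_1}...x_{i_k} <-> {i_1,...,i_k}); the monomial 1 is set0.
   A square-free monomial ideal I is determined by the set of square-free
   monomials it contains, which is an up-closed family (closed under
   multiplication by variables); we represent I by that family. *)
From mathcomp Require Import all_boot all_order.
Set Implicit Arguments. Unset Strict Implicit. Unset Printing Implicit Defensive.

Section Defs.
Variable n : nat.
Local Notation mon := {set 'I_n}.

Definition sqfree_monideal (U : {set mon}) : Prop :=
  forall A B : mon, A \in U -> A \subset B -> B \in U.

Definition mingens (U : {set mon}) : {set mon} :=
  [set A in U | [forall B in U, (B \subset A) ==> (B == A)]].

Definition ldeg (U : {set mon}) : nat := \big[minn/n]_(A in mingens U) #|A|.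
Definition deg (U : {set mon}) : nat := \max_(A in mingens U) #|A|.

Definition sm (l : nat) : {set mon} := [set A : mon | #|A| == l].

Definition sqcup (A : {set mon}) : {set mon} :=
  [set i |: g | g in A, i in ~: g].

Definition sqcap (A : {set mon}) : {set mon} :=
  [set g :\ i | g in A, i in g] :\ set0.

Definition in_sqcup_inf (A : {set mon}) (B : mon) : Prop :=
  exists i, (0 < i)%N /\ B \in iter i sqcup A.
Definition in_sqcap_inf (A : {set mon}) (B : mon) : Prop :=
  exists i, (0 < i)%N /\ B \in iter i sqcap A.

Definition facet_cx (U : {set mon}) : {set mon} :=
  [set F : mon | [exists g in mingens U, F \subset g]].

Definition sr_cx (U : {set mon}) : {set mon} := [set F : mon | F \notin U].

(* f_k(Δ) = number of faces of dimension k-1 ... we index by cardinality *)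
Definition fnum (D : {set mon}) (k : nat) : nat := #|[set F in D | #|F| == k]|.

(* f-vectors (f_0, f_1, ..., i.e. faces of dimension >= 0) coincide *)
Definition f_ideal (U : {set mon}) : Prop :=
  sqfree_monideal U /\
  forall k, (0 < k)%N -> fnum (facet_cx U) k = fnum (sr_cx U) k.

End Defs.

(* Main.v *)
Require Import Defs.
From mathcomp Require Import all_boot all_order.
From mathcomp Require Import zify.
Set Implicit Arguments.

Section Aux.
Variable n : nat.
Local Notation mon := {set 'I_n}.

Lemma sqcap_iter (A : {set mon}) k : forall g C : mon, g \in A -> C \subset g ->
  #|C| + k = #|g| -> C != set0 -> C \in iter k (@sqcap n) A.
Proof.
elim: k => [|k IH] g C gA Cg Hc C0.
  have -> : C = g by apply/eqP; rewrite eqEcard Cg -Hc addn0 leqnn.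
  by [].
have : g :\: C != set0.
  rewrite setD_eq0; apply/negP => gC; have := subset_leq_card gC; lia.
case/set0Pn => i; rewrite inE => /andP [iC ig].
have C'g : i |: C \subset g by rewrite subUset sub1set ig Cg.
have Hc' : #|i |: C| + k = #|g| by rewrite cardsU1 iC; lia.
have C'0 : i |: C != set0 by apply/set0Pn; exists i; rewrite setU11.
have := IH g _ gA C'g Hc' C'0 => H.
rewrite iterS /sqcap in_setD1 C0 /=; apply/imset2P; apply: (Imset2spec (x1 := i |: C) (x2 := i)) => //.
  by rewrite /= setU11.
by rewrite setU1K.
Qed.

Lemma sqcup_iter (A : {set mon}) k : forall g C : mon, g \in A -> g \subset C ->
  #|C| = #|g| + k -> C \in iter k (@sqcup n) A.
Proof.
elim: k => [|k IH] g C gA gC Hc.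
  have -> : C = g by apply/eqP; rewrite eq_sym eqEcard gC Hc addn0 leqnn.
  by [].
have : C :\: g != set0.
  rewrite setD_eq0; apply/negP => Cg; have := subset_leq_card Cg; lia.
case/set0Pn => i; rewrite inE => /andP [ig iC].
have gC' : g \subset C :\ i.
  apply/subsetP => x xg; rewrite !inE (subsetP gC) // andbT.
  by apply/eqP => E; move: ig; rewrite -E xg.
have Hc' : #|C :\ i| = #|g| + k.
  have := cardsD1 i C; rewrite iC; lia.
have := IH g _ gA gC' Hc' => H.
rewrite iterS /sqcup; apply/imset2P; apply: (Imset2spec (x1 := C :\ i) (x2 := i)) => //.
  by rewrite /= !inE eqxx.
by rewrite setD1K.
Qed.

Lemma bigmin_le (I : eqType) (r : seq I) (P : pred I) (F : I -> nat) m x :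
  x \in r -> P x -> \big[minn/m]_(i <- r | P i) F i <= F x.
Proof.
elim: r => [//|y r IH]; rewrite inE big_cons => /orP [/eqP -> Px | xr Px].
  by rewrite Px geq_minl.
case: (P y); last exact: IH.
exact: leq_trans (geq_minr _ _) (IH xr Px).
Qed.

Lemma mingens_below (U : {set mon}) B : B \in U ->
  exists2 A, A \in mingens U & A \subset B.
Proof.
move=> BU.
pose P := [pred C : mon | (C \in U) && (C \subset B)].
have P0 : P B by rewrite /P /= BU subxx.
case: (@arg_minnP _ B P (fun C : mon => #|C|) P0) => A /andP [AU AB] Amin.
exists A => //; rewrite inE AU; apply/forallP => C; apply/implyP => CU.
apply/implyP => CA; rewrite eqEcard CA /=.
apply: Amin; rewrite /P inE CU /=; exact: subset_trans CA AB.
Qed.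

End Aux.

Theorem corollary6p4 (n : nat) (U : {set {set 'I_n}}) :
  f_ideal U ->
  forall l : nat, (1 <= l <= n)%N ->
    ((l < ldeg U)%N ->
       forall B, B \in sm n l -> in_sqcap_inf (mingens U) B) /\
    ((deg U < l)%N ->
       forall B, B \in sm n l -> in_sqcup_inf (mingens U) B).
Proof.
move=> [Hid Hf] l /andP [l1 ln].
have ldegP : forall A, A \in mingens U -> ldeg U <= #|A|.
  move=> A AG; rewrite /ldeg; apply: bigmin_le => //; exact: mem_index_enum.
have degP : forall A, A \in mingens U -> #|A| <= deg U.
  move=> A AG; exact: leq_bigmax_cond.
have mgU : forall A, A \in mingens U -> A \in U.
  by move=> A; rewrite inE => /andP [].
have Hfl := Hf l l1.
split.
- move=> lt B; rewrite inE => /eqP Bl.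
  have notU : forall C : {set 'I_n}, #|C| = l -> C \notin U.
    move=> C Cl; apply/negP => CU; case: (mingens_below CU) => A AG AC.
    have := ldegP A AG; have := subset_leq_card AC; lia.
  have sub : [set F in facet_cx U | #|F| == l] \subset [set F in sr_cx U | #|F| == l].
    apply/subsetP => F; rewrite !inE => /andP [_ /eqP Fl].
    by rewrite Fl eqxx andbT; apply: notU.
  have E : [set F in facet_cx U | #|F| == l] = [set F in sr_cx U | #|F| == l].
    by apply/eqP; rewrite eqEcard sub /=; move: Hfl; rewrite /fnum => ->.
  have : B \in [set F in sr_cx U | #|F| == l] by rewrite !inE notU // Bl eqxx.
  rewrite -E !inE => /andP [/existsP [g /andP [gG Bg]] _].
  have gl := ldegP g gG.
  exists (#|g| - #|B|); split; first by rewrite Bl; lia.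
  apply: (@sqcap_iter n (mingens U) (#|g| - #|B|) g B gG Bg); first by have := subset_leq_card Bg; lia.
  by rewrite -cards_eq0 Bl; lia.
- move=> lt B; rewrite inE => /eqP Bl.
  have E0 : fnum (facet_cx U) l = 0.
    rewrite /fnum; apply/eqP; rewrite cards_eq0; apply/eqP/setP => F.
    rewrite !inE; apply/negP => /andP [/existsP [g /andP [gG Fg]] /eqP Fl].
    have := degP g gG; have := subset_leq_card Fg; lia.
  have BU : B \in U.
    move: E0; rewrite Hfl /fnum => /eqP; rewrite cards_eq0 => /eqP E.
    apply/negPn/negP => nB.
    have : B \in [set F in sr_cx U | #|F| == l] by rewrite !inE nB Bl eqxx.
    by rewrite E inE.
  case: (mingens_below BU) => g gG gB.
  have := degP g gG => gd.
  exists (#|B| - #|g|); split; first by rewrite Bl; lia.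
  apply: (@sqcup_iter n (mingens U) (#|B| - #|g|) g B gG gB); have := subset_leq_card gB; lia.
Qed.
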